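(* Suppose the block size is infinite and let $r>0$. The solitary-or-posted-price mechanism with reserve price $r$ satisfies weak UIC, weak MIC, and $c$-weak-SCP for every integer $c\ge1$.
   Context: Setting (TFM). Each user $i$ has a true value $v_i\ge0$ and submits a single bid $b_i\ge0$. A TFM consists of an inclusion rule (run by the miner, choosing which bids to include; the block size is unbounded here) and confirmation, payment and miner-revenue rules (run by the blockchain on the included bids); the miner receives at most the total payment and the remainder is burnt. Solitary-or-posted-price mechanism with reserve $r$: include the two highest bids and every other bid that is at least $r$. Every included bid that is at least $r$ is confirmed, and the highest included bid is always confirmed (even if below $r$); all other bids are unconfirmed. Let $b_2$ be the second-highest included bid (taken to be $0$ if it does not exist). Every confirmed bid pays $\min(b_2,r)$; the miner is paid $\min(b_2,r)$; the remaining payment is burnt. Strategic players: a user, the miner, or the miner with some users; they may have users bid untruthfully after seeing all bids, inject fake bids (true value $0$), and (if the miner is involved) include any set of available bids. Weak ($1$-strict) utility: miner revenue (if the miner is in the player) plus $v-p$ for each confirmed transaction of the player (true value $v$, payment $p$), minus $(b-v)$ for each unconfirmed transaction of the player with bid $b>v$. Weak UIC: with an honest miner, each user's weak utility is maximized by truthful bidding without fake bids, whatever the other bids. Weak MIC: the miner's weak utility is maximized by honestly following the inclusion rule, whatever the bids. $c$-weak-SCP: for every coalition of the miner with between $1$ and $c$ users, joint weak utility is maximized by truthful bidding and honest miner behavior, whatever the other bids. *)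

(* Defs.v *)
From HB Require Import structures.
From mathcomp Require Import all_boot all_order all_algebra.
Set Implicit Arguments. Unset Strict Implicit. Unset Printing Implicit Defensive.
Import Order.TTheory GRing.Theory Num.Theory.
Local Open Scope ring_scope.

Section TFMs.
Variable R : realFieldType.

(* A transaction in the mempool: its bid, and [Some v] if it belongs to the
   strategic player (true value [v]; fake bids have true value 0), or [None]
   if it belongs to some other (non-strategic) user. *)
Definition tx := (R * option R)%type.

(* The inclusion rule sees the bids of the mempool (in order) and
   returns, for each position, whether the bid is included; the block is the
   included sub-list (in mempool order).  The blockchain rules see the bids of
   the block (in block order) and return, for each position of the block,
   (confirmed?, payment), and the miner revenue. *)
Record TFM := mkTFM {
  incl : seq R -> seq bool ;
  confpay : seq R -> seq (bool * R) ;
  minerRev : seq R -> R }.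

Definition rank (bs : seq R) (i : nat) : nat :=
  count (fun j => (nth 0 bs i < nth 0 bs j) || ((nth 0 bs j == nth 0 bs i) && (j < i)%N))
        (iota 0 (size bs)).

(* second-highest bid (0 if there are fewer than two bids) *)
Definition secondHighest (bs : seq R) : R :=
  nth 0 (sort (fun x y : R => y <= x) bs) 1.

Definition sop_price (r : R) (bs : seq R) : R := Num.min (secondHighest bs) r.

Definition sop_incl (r : R) (bs : seq R) : seq bool :=
  [seq (r <= nth 0 bs i) || (rank bs i < 2)%N | i <- iota 0 (size bs)].

Definition sop_confpay (r : R) (bs : seq R) : seq (bool * R) :=
  [seq let c := (r <= nth 0 bs i) || (rank bs i == 0)%N in
       (c, if c then sop_price r bs else 0) | i <- iota 0 (size bs)].

Definition sop (r : R) : TFM := mkTFM (sop_incl r) (sop_confpay r) (sop_price r).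

Definition txu (v b : R) (c : bool) (p : R) : R :=
  if c then v - p else - Num.max 0 (b - v).

Definition ownU (x : tx) (o : bool * R) : R :=
  if x.2 is Some v then txu v x.1 o.1 o.2 else 0.

(* weak utility of the player when [block] is the block and [rest] the
   non-included transactions; [miner] says whether the miner is in the player *)
Definition utility (M : TFM) (miner : bool) (block rest : seq tx) : R :=
  (if miner then minerRev M (map fst block) else 0)
  + \sum_(xo <- zip block (confpay M (map fst block))) ownU xo.1 xo.2
  + \sum_(x <- rest) ownU x (false, 0).

Definition honest (M : TFM) (mp : seq tx) : seq tx * seq tx :=
  let m := incl M (map fst mp) in (mask m mp, mask (map negb m) mp).

Definition honest_util (M : TFM) (miner : bool) (mp : seq tx) : R :=
  utility M miner (honest M mp).1 (honest M mp).2.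

Definition otherTx (others : seq R) : seq tx := [seq (b, None) | b <- others].
Definition fakeTx (fs : seq R) : seq tx := [seq (f, Some 0) | f <- fs].
Definition truthTx (vs : seq R) : seq tx := [seq (v, Some v) | v <- vs].
Definition nonneg (s : seq R) : bool := all (fun x => 0 <= x) s.

(* Weak UIC: honest miner; a user of value v bidding b and injecting fakes fs
   (mempool in any order) never beats truthful bidding. *)
Definition weak_UIC (M : TFM) : Prop :=
  forall (others : seq R) (v b : R) (fs : seq R) (M0 M1 : seq tx),
    nonneg others -> 0 <= v -> 0 <= b -> nonneg fs ->
    perm_eq M0 (otherTx others ++ [:: (v, Some v)]) ->
    perm_eq M1 (otherTx others ++ (b, Some v) :: fakeTx fs) ->
    honest_util M false M1 <= honest_util M false M0.

(* Weak MIC: the miner injects fakes fs and chooses any block (a sub-multiset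
   of the mempool, in any order). *)
Definition weak_MIC (M : TFM) : Prop :=
  forall (others fs : seq R) (M0 block rest : seq tx),
    nonneg others -> nonneg fs ->
    perm_eq M0 (otherTx others) ->
    perm_eq (block ++ rest) (otherTx others ++ fakeTx fs) ->
    utility M true block rest <= honest_util M true M0.

(* c-weak-SCP: coalition of the miner with k users, 1 <= k <= c, of values vs,
   bidding bs, injecting fakes fs, choosing any block. *)
Definition c_weak_SCP (M : TFM) (c : nat) : Prop :=
  forall (others vs bs fs : seq R) (M0 block rest : seq tx),
    (1 <= size vs <= c)%N -> size bs = size vs ->
    nonneg others -> nonneg vs -> nonneg bs -> nonneg fs ->
    perm_eq M0 (otherTx others ++ truthTx vs) ->
    perm_eq (block ++ rest)
      (otherTx others ++ [seq (bv.1, Some bv.2) | bv <- zip bs vs] ++ fakeTx fs) ->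
    utility M true block rest <= honest_util M true M0.

End TFMs.

(* Main.v *)
Require Import Defs.
From HB Require Import structures.
From mathcomp Require Import all_boot all_order all_algebra.
From mathcomp Require Import ring lra zify.
Import Order.TTheory GRing.Theory Num.Theory.
Local Open Scope ring_scope.

Lemma count2 {T : eqType} (P : pred T) (s : seq T) x y :
  x != y -> x \in s -> y \in s -> P x -> P y -> (2 <= count P s)%N.
Proof.
move=> nxy xs ys Px Py.
have H1 : (0 < count (pred1 x) s)%N by rewrite -has_count; apply/hasP; exists x => //=.
have H2 : (0 < count (pred1 y) s)%N by rewrite -has_count; apply/hasP; exists y => //=.
have H3 := count_predUI (pred1 x) (pred1 y) s.
have H4 : count (predI (pred1 x) (pred1 y)) s = 0%N.
  apply/eqP; rewrite -leqn0 -(count_pred0 s); apply: sub_count => z /= /andP[/eqP -> /eqP e].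
  by rewrite e eqxx in nxy.
have H5 : (count (predU (pred1 x) (pred1 y)) s <= count P s)%N.
  by apply: sub_count => z /= /orP[] /eqP ->.
lia.
Qed.

Lemma count_splitQ {T : Type} (P Q : pred T) (s : seq T) :
  count P s = (count (predI P Q) s + count (predI P (predC Q)) s)%N.
Proof. elim: s => //= a s ->; case: (P a); case: (Q a) => /=; lia. Qed.

Lemma count_exC {T : eqType} (P Q : pred T) (s : seq T) :
  (count Q s < count P s)%N -> exists2 x, x \in s & P x && ~~ Q x.
Proof.
rewrite (count_splitQ P Q) => H.
have : (0 < count (predI P (predC Q)) s)%N.
  have : (count (predI P Q) s <= count Q s)%N by apply: sub_count => z /andP[].
  lia.
by rewrite -has_count => /hasP[x xs Hx]; by exists x.
Qed.

Lemma count_iota_nth {T : Type} (x0 : T) (P : pred T) (s : seq T) :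
  count P s = count (fun k => P (nth x0 s k)) (iota 0 (size s)).
Proof. by rewrite -{1}(mkseq_nth x0 s) /mkseq count_map. Qed.

Lemma count2_iota (P : pred nat) n i j :
  i != j -> (i < n)%N -> (j < n)%N -> P i -> P j -> (2 <= count P (iota 0 n))%N.
Proof. by move=> nij ilt jlt; apply: count2 nij _ _; rewrite mem_iota /=. Qed.

Definition geR {R : realFieldType} (x : R) := fun b : R => x <= b.

Lemma perm_cnt {T : eqType} (a : pred T) {s1 s2 : seq T} :
  perm_eq s1 s2 -> count a s1 = count a s2.
Proof. by move/permP. Qed.

Lemma sec_ge0 {R : realFieldType} {s : seq R} : nonneg s -> 0 <= secondHighest s.
Proof.
move=> /allP H; rewrite /secondHighest.
case: (ltnP 1 (size (sort (fun x y : R => y <= x) s))) => hs.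
  apply: H; rewrite -(perm_mem (permEl (perm_sort (fun x y : R => y <= x) s))); exact: mem_nth.
by rewrite nth_default.
Qed.

Lemma sec_count {R : realFieldType} (s : seq R) (x : R) : 0 < x ->
  (x <= secondHighest s) = (2 <= count (geR x) s)%N.
Proof.
move=> x0; rewrite /secondHighest -(perm_cnt (geR x) (permEl (perm_sort (fun x y : R => y <= x) s))).
have : sorted (fun x y : R => y <= x) (sort (fun x y : R => y <= x) s).
  by apply: sort_sorted => a b; exact: le_total.
case: (sort _ s) => [|a [|b t]] /=.
- by rewrite lt_geF.
- by rewrite lt_geF //; case: (geR x a).
move=> /andP[ab pt].
have tr : transitive (fun x y : R => y <= x) by move=> u v w /= h1 h2; exact: le_trans h2 h1.
have /allP allt := order_path_min tr pt.
case: (leP x b) => xb.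
  have xa : x <= a := le_trans xb ab.
  by rewrite /geR xa xb.
have -> : count (geR x) t = 0%N.
  rewrite (@eq_in_count _ _ pred0) ?count_pred0 // => z zt /=.
  by apply/negbTE; rewrite /geR -ltNge; exact: le_lt_trans (allt z zt) xb.
rewrite /geR (lt_geF xb) /=; case: (x <= a); by [].
Qed.

Lemma sec_le {R : realFieldType} (s t : seq R) : nonneg t ->
  (forall x, 0 < x -> (2 <= count (geR x) s)%N -> (2 <= count (geR x) t)%N) ->
  secondHighest s <= secondHighest t.
Proof.
move=> nt H; case: (leP (secondHighest s) 0) => h.
  by apply: (le_trans h); apply: sec_ge0.
by rewrite sec_count //; apply: H => //; rewrite -sec_count.
Qed.

Lemma sec_perm {R : realFieldType} {s t : seq R} : perm_eq s t ->
  secondHighest s = secondHighest t.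
Proof.
move=> pst; rewrite /secondHighest; congr nth.
apply/perm_sortP => //.
- by move=> a b; exact: le_total.
- by move=> u v w /= h1 h2; exact: le_trans h2 h1.
- by move=> a b /andP[h1 h2]; apply/le_anti; rewrite h1 h2.
Qed.

Definition beats {R : realFieldType} (bs : seq R) (j i : nat) :=
  (nth 0 bs i < nth 0 bs j) || ((nth 0 bs j == nth 0 bs i) && (j < i)%N).

Lemma rankE {R : realFieldType} (bs : seq R) i :
  rank bs i = count (beats bs ^~ i) (iota 0 (size bs)).
Proof. by []. Qed.

Lemma beats_irr {R : realFieldType} (bs : seq R) i : ~~ beats bs i i.
Proof. by rewrite /beats ltxx ltnn andbF. Qed.

Lemma beats_le {R : realFieldType} {bs : seq R} {j i : nat} : beats bs j i -> nth 0 bs i <= nth 0 bs j.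
Proof. by case/orP=> [/ltW //|/andP[/eqP -> _]]. Qed.

Lemma beats_trans {R : realFieldType} (bs : seq R) k j i :
  beats bs j i -> beats bs k j -> beats bs k i.
Proof.
rewrite /beats => /orP[h1|/andP[/eqP e1 l1]] /orP[h2|/andP[/eqP e2 l2]].
- by rewrite (lt_trans h1 h2).
- by rewrite e2 h1.
- by rewrite -e1 h2.
- by rewrite e2 e1 eqxx (ltn_trans l2 l1) orbT.
Qed.

Lemma beats_total {R : realFieldType} (bs : seq R) j i :
  j != i -> beats bs j i || beats bs i j.
Proof.
move=> nji; rewrite /beats.
case: (ltgtP (nth 0 bs i) (nth 0 bs j)) => //= e.
by rewrite -neq_ltn.
Qed.

Lemma rank_lt {R : realFieldType} {bs : seq R} {j i : nat} :
  (j < size bs)%N -> beats bs j i -> (rank bs j < rank bs i)%N.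
Proof.
move=> jlt bji; rewrite !rankE (count_splitQ (beats bs ^~ i) (beats bs ^~ j)).
have -> : count (predI (beats bs ^~ i) (beats bs ^~ j)) (iota 0 (size bs)) =
          count (beats bs ^~ j) (iota 0 (size bs)).
  by apply: eq_count => k /=; case e: (beats bs k j); rewrite ?andbF ?andbT //; exact: beats_trans bji e.
suff : (0 < count (predI (beats bs ^~ i) (predC (beats bs ^~ j))) (iota 0 (size bs)))%N by lia.
rewrite -has_count; apply/hasP; exists j; first by rewrite mem_iota.
by rewrite /= bji beats_irr.
Qed.

Lemma rank0_max {R : realFieldType} {bs : seq R} {i j : nat} :
  rank bs i = 0%N -> (j < size bs)%N -> nth 0 bs j <= nth 0 bs i.
Proof.
move=> r0 jlt; rewrite leNgt; apply/negP => h.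
have : (0 < rank bs i)%N.
  rewrite rankE -has_count; apply/hasP; exists j; first by rewrite mem_iota.
  by rewrite /beats h.
by rewrite r0.
Qed.

Lemma rank0_uniq {R : realFieldType} (bs : seq R) i j :
  (i < size bs)%N -> (j < size bs)%N -> rank bs i = 0%N -> rank bs j = 0%N -> i = j.
Proof.
move=> ilt jlt ri rj; apply/eqP; apply/negP => /negP nij.
case/orP: (@beats_total _ bs i j nij) => h.
- by have := rank_lt ilt h; rewrite rj.
- by have := rank_lt jlt h; rewrite ri.
Qed.

Lemma count_ge_idx {R : realFieldType} (bs : seq R) (x : R) :
  count (geR x) bs = count (fun k => x <= nth 0 bs k) (iota 0 (size bs)).
Proof. exact: count_iota_nth. Qed.

Lemma rank_gt_sec {R : realFieldType} (bs : seq R) i : nonneg bs ->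
  (i < size bs)%N -> secondHighest bs < nth 0 bs i -> rank bs i = 0%N.
Proof.
move=> nn ilt hs; apply/eqP; rewrite -leqn0 leqNgt; apply/negP.
rewrite rankE -has_count => /hasP[j]; rewrite mem_iota /= add0n => jlt bji.
have ipos : 0 < nth 0 bs i := le_lt_trans (sec_ge0 nn) hs.
have : (2 <= count (geR (nth 0%R bs i)) bs)%N.
  rewrite count_ge_idx; apply: (@count2_iota _ _ j i) => //.
  - by apply/negP => /eqP e; move: bji; rewrite e (negbTE (beats_irr _ _)).
  - exact: beats_le.
by rewrite -sec_count // leNgt hs.
Qed.

Lemma rank0_ge_sec {R : realFieldType} (bs : seq R) i : nonneg bs ->
  (i < size bs)%N -> rank bs i = 0%N -> secondHighest bs <= nth 0 bs i.
Proof.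
move=> nn ilt r0; rewrite leNgt; apply/negP => h.
have spos : 0 < secondHighest bs.
  exact: (le_lt_trans (allP nn _ (mem_nth 0 ilt)) h).
have : (2 <= count (geR (secondHighest bs)) bs)%N by rewrite -sec_count.
rewrite count_ge_idx => hc; have : has (fun k => secondHighest bs <= nth 0 bs k) (iota 0 (size bs)) by rewrite has_count; apply: leq_trans hc.
move=> /hasP[j].
rewrite mem_iota /= add0n => jlt hj.
by have := rank0_max r0 jlt; rewrite leNgt (lt_le_trans h hj).
Qed.

Lemma ex_rank0 {R : realFieldType} {bs : seq R} {i : nat} : (i < size bs)%N ->
  exists2 t, (t < size bs)%N & (rank bs t = 0%N) /\ nth 0 bs i <= nth 0 bs t.
Proof.
move: {2}(rank bs i) (leqnn (rank bs i)) => k; elim: k i => [|k IH] i.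
  by rewrite leqn0 => /eqP r0 ilt; exists i.
move=> rk ilt; case: (posnP (rank bs i)) => [r0|rpos]; first by exists i.
move: rpos; rewrite rankE -has_count => /hasP[j]; rewrite mem_iota /= add0n => jlt bji.
have := rank_lt jlt bji => rj.
have [t tlt [rt jt]] := IH j (ltac:(lia)) jlt.
by exists t => //; split => //; exact: le_trans (beats_le bji) jt.
Qed.


Lemma iota1S n : iota 1 n = map succn (iota 0 n).
Proof. by rewrite -(iotaDl 1 0). Qed.

Lemma count_mask_idx {T : Type} (x0 : T) (P : pred T) (m : bitseq) (s : seq T) :
  count P (mask m s) = count (fun k => nth false m k && P (nth x0 s k)) (iota 0 (size s)).
Proof.
elim: s m => [|x s IH] [|b m] //=.
  rewrite (@eq_count _ _ pred0) ?count_pred0 //= => k; by rewrite nth_nil.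
rewrite iota1S count_map -IH; case: b => //=.
Qed.

Lemma mask_perm {T : eqType} {m : bitseq} {s : seq T} : size m = size s ->
  perm_eq s (mask m s ++ mask (map negb m) s).
Proof.
elim: s m => [|x s IH] [|b m] //= [] /IH h.
case: b => /=; first by rewrite perm_cons.
rewrite perm_sym perm_catC /= perm_cons perm_sym; by rewrite perm_sym perm_catC perm_sym.
Qed.

Lemma mem_maskP {T : eqType} (x0 : T) (m : bitseq) (s : seq T) x :
  x \in mask m s -> exists2 i, (i < size s)%N & nth false m i /\ nth x0 s i = x.
Proof.
elim: s m => [|y s IH] [|b m] //=.
case: b => /=.
  rewrite inE => /orP[/eqP ->|/IH[i ilt [h1 h2]]]; first by exists 0%N.
  by exists i.+1.
by move/IH=> [i ilt [h1 h2]]; exists i.+1.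
Qed.

Lemma mem_mask_nth {T : eqType} (x0 : T) (m : bitseq) (s : seq T) i :
  (i < size s)%N -> nth false m i -> nth x0 s i \in mask m s.
Proof.
elim: s m i => [|y s IH] [|b m] [|i] //=.
- by move=> _ ->; rewrite inE eqxx.
- by move=> ilt h; case: b; rewrite ?inE (IH m i) ?orbT.
Qed.


Lemma size_sop_incl {R : realFieldType} (r : R) bs : size (sop_incl r bs) = size bs.
Proof. by rewrite size_map size_iota. Qed.

Lemma sop_incl_nth {R : realFieldType} (r : R) bs k : (k < size bs)%N ->
  nth false (sop_incl r bs) k = (r <= nth 0 bs k) || (rank bs k < 2)%N.
Proof. by move=> klt; rewrite (nth_map 0%N) ?size_iota // nth_iota. Qed.

Lemma nonneg_mask {R : realFieldType} (m : bitseq) (s : seq R) : nonneg s -> nonneg (mask m s).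
Proof. by move=> /allP h; apply/allP => x /mem_mask /h. Qed.

Lemma count_mask_le {T : eqType} (P : pred T) m (s : seq T) : size m = size s ->
  (count P (mask m s) <= count P s)%N.
Proof. by move=> sz; rewrite (perm_cnt P (mask_perm sz)) count_cat leq_addr. Qed.

Lemma sec_mask_le {R : realFieldType} (m : bitseq) (s : seq R) : size m = size s -> nonneg s ->
  secondHighest (mask m s) <= secondHighest s.
Proof.
move=> sz nn; apply: sec_le => // x x0 h; apply: leq_trans h _; exact: count_mask_le.
Qed.

Lemma sec_incl {R : realFieldType} (r : R) (bs : seq R) : nonneg bs ->
  secondHighest (mask (sop_incl r bs) bs) = secondHighest bs.
Proof.
move=> nn; apply/le_anti; rewrite sec_mask_le ?size_sop_incl //=.
apply: sec_le; first exact: nonneg_mask.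
move=> x x0; set m := sop_incl r bs; set n := size bs.
rewrite (count_mask_idx 0) count_ge_idx -/n.
set Q := fun k => nth false m k && geR x (nth 0 bs k).
have claim : forall i, (i < n)%N -> x <= nth 0 bs i -> ~~ nth false m i ->
    (2 <= count Q (iota 0 n))%N.
  move=> i0; move: {2}(rank bs i0) (leqnn (rank bs i0)) => k.
  elim: k i0 => [|k IH] i.
    move=> r0 ilt _; rewrite /m sop_incl_nth //; move: r0; rewrite leqn0 => /eqP ->.
    by rewrite orbT.
  move=> rk ilt xi; rewrite /m sop_incl_nth // negb_or -leqNgt => /andP[_ r2].
  move: r2; rewrite rankE (count_splitQ _ (nth false m)) -/n => r2.
  case: (leqP 2 (count (predI (beats bs ^~ i) (nth false m)) (iota 0 n))) => c2.
    apply: leq_trans c2 _; apply: sub_count => j /andP[bji mj].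
    by rewrite /Q mj /geR (le_trans xi (beats_le bji)).
  have : (0 < count (predI (beats bs ^~ i) (predC (nth false m))) (iota 0 n))%N by lia.
  rewrite -has_count => /hasP[j]; rewrite mem_iota /= add0n => jlt /andP[bji mj].
  have rj := rank_lt jlt bji.
  apply: (IH j) => //; first lia.
  exact: le_trans xi (beats_le bji).
move=> c; rewrite (count_splitQ _ (nth false m)) in c.
move: c; set A := count (predI _ (nth false m)) _; set B := count (predI _ (predC _)) _ => c.
case: (leqP 2 A) => c2.
  apply: leq_trans c2 _; apply: sub_count => j /andP[h1 h2]; by rewrite /Q h2 /geR h1.
have : (0 < B)%N by lia.
rewrite -has_count => /hasP[i]; rewrite mem_iota /= add0n => ilt /andP[xi mi].
exact: (claim i).
Qed.

Lemma incl_max {R : realFieldType} (r : R) (bs : seq R) y : y \in bs ->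
  exists2 z, z \in mask (sop_incl r bs) bs & y <= z.
Proof.
move=> /(nthP 0)[i ilt <-].
have [t tlt [rt it]] := ex_rank0 ilt.
exists (nth 0 bs t) => //; apply: mem_mask_nth => //.
by rewrite sop_incl_nth // rt orbT.
Qed.


Definition dtx {R : realFieldType} : tx R := (0, None).
Definition confb {R : realFieldType} (r : R) (bs : seq R) (k : nat) :=
  (r <= nth 0 bs k) || (rank bs k == 0)%N.
Definition ownc {R : realFieldType} (e : tx R) (c : bool) (p : R) :=
  ownU e (c, if c then p else 0).

Lemma util_sop {R : realFieldType} (r : R) miner (block rest : seq (tx R)) :
  utility (sop r) miner block rest =
  (if miner then sop_price r (map fst block) else 0)
  + \sum_(k < size block) ownc (nth dtx block k) (confb r (map fst block) k)
                               (sop_price r (map fst block))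
  + \sum_(x <- rest) ownU x (false, 0).
Proof.
rewrite /utility /=; congr (_ + _ + _).
rewrite (big_nth (dtx, (false, 0))) /sop_confpay size_zip size_map size_map size_iota.
rewrite minnn big_mkord; apply: eq_bigr => k _.
rewrite nth_zip ?size_map ?size_iota // (nth_map 0%N) ?size_iota ?size_map //.
by rewrite nth_iota ?size_map //.
Qed.

Lemma ownc_none {R : realFieldType} (b : R) c p : ownc (b, None) c p = 0.
Proof. by []. Qed.

Lemma ownc_conf {R : realFieldType} (b v : R) p : ownc (b, Some v) true p = v - p.
Proof. by []. Qed.

Lemma ownc_unconf {R : realFieldType} (b v : R) p : ownc (b, Some v) false p = - Num.max 0 (b - v).
Proof. by []. Qed.

Lemma ownc_unconf_le0 {R : realFieldType} (e : tx R) p : ownc e false p <= 0.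
Proof.
by case: e => b [v|] //=; rewrite /ownc /ownU /txu /= oppr_le0 le_max lexx.
Qed.

Lemma rest_le0 {R : realFieldType} (rest : seq (tx R)) : \sum_(x <- rest) ownU x (false, 0) <= 0.
Proof.
apply: sumr_le0 => x _; have := ownc_unconf_le0 x 0; by [].
Qed.

Lemma sum_le_pick {R : realFieldType} n (f g : 'I_n -> R) (j : 'I_n) :
  (forall k, k != j -> f k <= g k) -> (forall k, 0 <= g k) ->
  \sum_(k < n) f k <= f j + \sum_(k < n) g k.
Proof.
move=> fg g0; rewrite (bigD1 j) //= lerD2l.
apply: le_trans (_ : \sum_(k < n | k != j) g k <= _).
  by apply: ler_sum => k /fg.
by rewrite [X in _ <= X](bigD1 j) //= lerDr.
Qed.

Lemma sum_ge_pick {R : realFieldType} n (f : 'I_n -> R) (j : 'I_n) :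
  (forall k, 0 <= f k) -> f j <= \sum_(k < n) f k.
Proof.
move=> f0; rewrite (bigD1 j) //= lerDl; exact: sumr_ge0.
Qed.


Lemma mem_zip2 {S T : eqType} (s : seq S) (t : seq T) x y :
  (x, y) \in zip s t -> x \in s /\ y \in t.
Proof.
elim: s t => [|a s IH] [|c t] //=; rewrite inE => /orP[/eqP[-> ->]|/IH[h1 h2]].
  by rewrite !inE !eqxx.
by rewrite !inE h1 h2 !orbT.
Qed.

Definition zipTx {R : realFieldType} (bs vs : seq R) : seq (tx R) :=
  [seq (bv.1, Some bv.2) | bv <- zip bs vs].

Definition tv {R : realFieldType} (e : tx R) : R := if e.2 is Some v then v else e.1.

Definition coalpos {R : realFieldType} (r : R) (e : tx R) : R :=
  if e.2 is Some v then Num.max 0 (v - r) else 0.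

Lemma F0_mem {R : realFieldType} (others vs bs fs : seq R) e :
  nonneg others -> nonneg bs -> nonneg fs ->
  e \in otherTx others ++ zipTx bs vs ++ fakeTx fs ->
  0 <= e.1 /\ (if e.2 is Some w then (w \in vs) \/ w = 0 else True).
Proof.
move=> /allP no /allP nb /allP nf; rewrite !mem_cat => /or3P[].
- by case/mapP => o oin ->; split => //; exact: no.
- case/mapP => [[b v]] /mem_zip2[bin vin] -> /=; split; [exact: nb| by left].
- by case/mapP => f fin ->; split; [exact: nf | right].
Qed.

Lemma F0_count {R : realFieldType} (others vs bs fs : seq R) (x : R) :
  0 < x -> size bs = size vs ->
  count (fun e => x <= tv e) (otherTx others ++ zipTx bs vs ++ fakeTx fs) =
  count (geR x) (others ++ vs).
Proof.
move=> x0 sz; rewrite !count_cat !count_map.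
have -> : count (preim (fun f : R => (f, Some 0)) (fun e => x <= tv e)) fs = 0%N.
  by rewrite (@eq_count _ _ pred0) ?count_pred0 // => f /=; rewrite /tv /= lt_geF.
rewrite addn0; congr (_ + _)%N.
rewrite -{2}(unzip2_zip (s:=bs) (t:=vs)) ?sz // count_map.
by apply: eq_count => -[b v].
Qed.

Lemma F0_sum {R : realFieldType} (r : R) (others vs bs fs : seq R) :
  0 < r -> size bs = size vs ->
  \sum_(e <- otherTx others ++ zipTx bs vs ++ fakeTx fs) coalpos r e =
  \sum_(v <- vs) Num.max 0 (v - r).
Proof.
move=> r0 sz; rewrite !big_cat /= !big_map.
rewrite big1 ?add0r; last by [].
rewrite [X in _ + X]big1 ?addr0; last by move=> f _; rewrite /coalpos /= sub0r max_l // oppr_le0 ltW.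
rewrite -{2}(unzip2_zip (s:=bs) (t:=vs)) ?sz // big_map.
by apply: eq_bigr => -[b v].
Qed.


Lemma own_le_coalpos {R : realFieldType} (r : R) (e : tx R) c :
  ownc e c r <= coalpos r e.
Proof.
case: e => b [v|] //=; case: c; rewrite /ownc /ownU /txu /coalpos /=.
- by rewrite le_max lexx orbT.
- by apply: (@le_trans _ _ (0)); rewrite ?oppr_le0 le_max lexx.
Qed.

Lemma conf_uniq {R : realFieldType} (r : R) (bs : seq R) i k : 0 < r ->
  secondHighest bs < r -> (i < size bs)%N -> (k < size bs)%N -> i != k ->
  confb r bs i -> confb r bs k -> False.
Proof.
move=> r0 sr ilt klt nik ci ck.
have both : forall a c, a != c -> (a < size bs)%N -> (c < size bs)%N ->
    r <= nth 0 bs a -> r <= nth 0 bs c -> False.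
  move=> a c nac alt clt ha hc.
  have : (2 <= count (geR r) bs)%N.
    rewrite count_ge_idx; exact: (count2_iota _ _ _ _ nac alt clt ha hc).
  by rewrite -sec_count // leNgt sr.
move: ci ck; rewrite /confb => /orP[hi|/eqP ri] /orP[hk|/eqP rk].
- exact: both nik ilt klt hi hk.
- by apply: (both i k nik ilt klt hi); apply: le_trans hi (rank0_max rk ilt).
- by apply: (both i k nik ilt klt _ hk); apply: le_trans hk (rank0_max ri klt).
- by move/eqP: nik; apply; exact: rank0_uniq ilt klt ri rk.
Qed.

Lemma dev_bound {R : realFieldType} (r : R) (others vs bs fs : seq R)
    (block rest : seq (tx R)) (H : R) :
  0 < r -> size bs = size vs ->
  nonneg others -> nonneg vs -> nonneg bs -> nonneg fs ->
  perm_eq (block ++ rest) (otherTx others ++ zipTx bs vs ++ fakeTx fs) ->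
  Num.min (secondHighest (others ++ vs)) r <= H ->
  Num.min (secondHighest (others ++ vs)) r +
    \sum_(v <- vs) (if r <= v then v - Num.min (secondHighest (others ++ vs)) r else 0) <= H ->
  (forall v, v \in vs -> v <= H) ->
  utility (sop r) true block rest <= H.
Proof.
move=> r0 sz nno nnv nnb nnf pF HF1 HF2 HF3.
set T := others ++ vs in HF1 HF2.
set p := Num.min (secondHighest T) r in HF1 HF2.
have nnT : nonneg T by rewrite /T /nonneg all_cat; apply/andP.
have p0 : 0 <= p by rewrite le_min sec_ge0 // ltW.
have pr : p <= r by rewrite ge_min lexx orbT.
set F0 := otherTx others ++ zipTx bs vs ++ fakeTx fs in pF.
have memB : forall e, e \in block -> 0 <= e.1 /\ (if e.2 is Some w then (w \in vs) \/ w = 0 else True).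
  move=> e eb; apply: (@F0_mem _ others vs bs fs e nno nnb nnf).
  by rewrite -(perm_mem pF) mem_cat eb.
have wH : forall e, e \in block -> forall w, e.2 = Some w -> w <= H.
  move=> e /memB[_] h w ew; rewrite ew in h; case: h => [/HF3 //|->].
  exact: le_trans p0 HF1.
have cntB : forall x, 0 < x -> (count (fun e => (x <= tv e)%R) block <= count (geR x) T)%N.
  move=> x x0; rewrite -(@F0_count _ others vs bs fs x x0 sz) -(perm_cnt _ pF) count_cat; exact: leq_addr.
have sumB : \sum_(e <- block) coalpos r e <= \sum_(v <- vs) Num.max 0 (v - r).
  rewrite -(@F0_sum _ r others vs bs fs r0 sz) -(perm_big _ pF) big_cat /= lerDl.
  by apply: sumr_ge0 => e _; rewrite /coalpos; case: e.2 => //= w; rewrite le_max lexx.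
rewrite util_sop /=.
set beta := map fst block.
set n := size block.
have szb : size beta = n by rewrite size_map.
have nthb : forall k, (k < n)%N -> nth 0 beta k = (nth dtx block k).1.
  by move=> k klt; rewrite (nth_map dtx).
have nnbeta : nonneg beta.
  by apply/allP => b /mapP[e eb ->]; case: (memB e eb).
have inB : forall k, (k < n)%N -> nth dtx block k \in block by move=> k klt; exact: mem_nth.
set p' := sop_price r beta.
apply: le_trans (_ : p' + \sum_(k < n) ownc (nth dtx block k) (confb r beta k) p' <= H).
  by rewrite gerDl rest_le0.
have sb0 : 0 <= secondHighest beta := sec_ge0 nnbeta.
have p'0 : 0 <= p' by rewrite /p' /sop_price le_min sb0 ltW.
have vH : forall k : 'I_n, forall w, (nth dtx block k).2 = Some w -> w <= H.
  by move=> k; apply: wH; exact: inB.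
have maxle : \sum_(v <- vs) Num.max 0 (v - r) <= \sum_(v <- vs) (if r <= v then v - p else 0).
  apply: ler_sum => v _; case: ifP => h.
    by rewrite ge_max subr_ge0 (le_trans pr h) /=; lra.
  by rewrite ge_max lexx subr_le0 ltW // ltNge h.
have cntI : forall x, 0 < x -> (count (fun k => (x <= tv (nth dtx block k))%R) (iota 0 n) <= count (geR x) T)%N.
  by move=> x x0; have := cntB x x0; rewrite (count_iota_nth dtx).
case: (leP r (secondHighest beta)) => hsb.
  have pe : p' = r by rewrite /p' /sop_price min_r.
  rewrite pe.
  have sumle : \sum_(k < n) coalpos r (nth dtx block k) <= \sum_(v <- vs) Num.max 0 (v - r).
    by apply: le_trans sumB; rewrite (big_nth dtx) big_mkord.
  case: (leP r (secondHighest T)) => hsT.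
    have pr' : p = r by rewrite /p min_r.
    apply: (@le_trans _ _ (r + \sum_(v <- vs) Num.max 0 (v - r))).
      rewrite lerD2l; apply: le_trans sumle; apply: ler_sum => k _; exact: own_le_coalpos.
    by apply: le_trans _ HF2; rewrite {1}pr' lerD2l.
  have c1 : (2 <= count (fun k => (r <= nth 0 beta k)%R) (iota 0 n))%N.
    by rewrite -szb -count_ge_idx -sec_count.
  have c2 : (count (fun k => (r <= tv (nth dtx block k))%R) (iota 0 n) <= 1)%N.
    apply: leq_trans (cntI r r0) _; by rewrite leqNgt -sec_count // -ltNge hsT.
  have [j jin /andP[hb ht]] := count_exC _ _ _ (leq_ltn_trans c2 c1).
  move: jin; rewrite mem_iota /= add0n => jlt.
  case ej: (nth dtx block j) => [bj [vj|]]; rewrite nthb // ej /= in hb; rewrite ej /tv /= in ht;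
    last by rewrite hb in ht.
  have cj : confb r beta j by rewrite /confb nthb // ej /= hb.
  have vjr : vj < r by rewrite ltNge.
  apply: (@le_trans _ _ (vj + \sum_(v <- vs) Num.max 0 (v - r))).
    apply: (@le_trans _ _ (r + (ownc (nth dtx block (Ordinal jlt)) (confb r beta (Ordinal jlt)) r
                 + \sum_(k < n) coalpos r (nth dtx block k)))).
      rewrite lerD2l; apply: sum_le_pick => [k _|k]; first exact: own_le_coalpos.
      by rewrite /coalpos; case: (nth dtx block k).2 => //= w; rewrite le_max lexx.
    rewrite /= cj ej ownc_conf addrA (addrC r) subrK lerD2l.
    exact: sumle.
  case: (leP vj p) => hvp.
    by apply: le_trans HF2; apply: lerD.
  have [_ ] := memB _ (inB j jlt); rewrite ej /= => -[vjin|vj0]; last first.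
    by move: hvp; rewrite vj0 ltNge p0.
  have vjpos : 0 < vj := le_lt_trans p0 hvp.
  have pe2 : p = secondHighest T by rewrite /p min_l // ltW.
  have S0 : \sum_(v <- vs) Num.max 0 (v - r) = 0.
    rewrite big1_seq // => v /andP[_ vin]; apply/max_l; rewrite subr_le0 leNgt; apply/negP => rv.
    have : (2 <= count (geR vj) T)%N.
      apply: (@count2 _ _ _ v vj).
      - by apply/negP => /eqP e; move: rv; rewrite e ltNge (ltW vjr).
      - by rewrite /T mem_cat vin orbT.
      - by rewrite /T mem_cat vjin orbT.
      - by rewrite /geR (le_trans (ltW vjr) (ltW rv)).
      - by rewrite /geR lexx.
    by rewrite -sec_count // -pe2 leNgt hvp.
  by rewrite S0 addr0; exact: HF3.
have pe : p' = secondHighest beta by rewrite /p' /sop_price min_l // ltW.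
case: (boolP (has (fun k => confb r beta k && ((nth dtx block k).2 != None)) (iota 0 n))) => hasc.
  move: hasc => /hasP[j]; rewrite mem_iota /= add0n => jlt /andP[cj ej].
  case e: (nth dtx block j) ej => [bj [vj|]] // _.
  apply: (@le_trans _ _ (p' + (ownc (nth dtx block (Ordinal jlt)) (confb r beta (Ordinal jlt)) p'
                 + \sum_(k < n) (0:R)))).
    rewrite lerD2l; apply: sum_le_pick => // k nkj.
    case ck: (confb r beta k); last exact: ownc_unconf_le0.
    exfalso; apply: (@conf_uniq _ r beta k j r0) => //.
    - by rewrite szb.
    - by rewrite szb.
  rewrite /= cj e ownc_conf big1 // addr0 addrC subrK.
  by apply: (vH (Ordinal jlt)); rewrite /= e.
have own0 : forall k : 'I_n, ownc (nth dtx block k) (confb r beta k) p' <= 0.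
  move=> k; case ck: (confb r beta k); last exact: ownc_unconf_le0.
  move/hasPn: hasc => /(_ k); rewrite mem_iota /= add0n ltn_ord ck /= => /(_ isT).
  by case: (nth dtx block k) => b [w|].
case: (leP (secondHighest beta) (secondHighest T)) => hs.
  apply: (@le_trans _ _ (p' + 0)).
    by rewrite lerD2l; apply: sumr_le0 => k _; exact: own0.
  rewrite addr0; apply: le_trans HF1.
  by rewrite /p' /sop_price /p le_min !ge_min hs lexx orbT.
set x := secondHighest beta.
have x0 : 0 < x := le_lt_trans (sec_ge0 nnT) hs.
have c1 : (2 <= count (fun k => (x <= nth 0 beta k)%R) (iota 0 n))%N.
  by rewrite -szb -count_ge_idx -sec_count.
have c2 : (count (fun k => (x <= tv (nth dtx block k))%R) (iota 0 n) <= 1)%N.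
  apply: leq_trans (cntI x x0) _; by rewrite leqNgt -sec_count // -ltNge hs.
have [j jin /andP[hb ht]] := count_exC _ _ _ (leq_ltn_trans c2 c1).
move: jin; rewrite mem_iota /= add0n => jlt.
case ej: (nth dtx block j) => [bj [vj|]]; rewrite nthb // ej /= in hb; rewrite ej /tv /= in ht;
  last by rewrite hb in ht.
have cj : confb r beta j = false.
  apply/negP => cj; move/hasPn: hasc => /(_ j); rewrite mem_iota /= add0n jlt cj ej.
  by move=> /(_ isT).
apply: (@le_trans _ _ (p' + (ownc (nth dtx block (Ordinal jlt)) (confb r beta (Ordinal jlt)) p'
               + \sum_(k < n) (0:R)))).
  by rewrite lerD2l; apply: sum_le_pick => // k _; exact: own0.
rewrite /= cj ej ownc_unconf big1 // addr0.
apply: le_trans (vH (Ordinal jlt) vj _); last by rewrite /= ej.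
have : bj - vj <= Num.max 0 (bj - vj) by rewrite le_max lexx orbT.
have : p' <= bj by rewrite pe.
lra.
Qed.


Lemma map_fst_other {R : realFieldType} (s : seq R) : map fst (otherTx s) = s.
Proof. by elim: s => //= a s ->. Qed.
Lemma map_fst_truth {R : realFieldType} (s : seq R) : map fst (truthTx s) = s.
Proof. by elim: s => //= a s ->. Qed.

Lemma honest_facts {R : realFieldType} (r : R) (others vs : seq R) (M0 : seq (tx R)) miner :
  0 < r -> nonneg others -> nonneg vs ->
  perm_eq M0 (otherTx others ++ truthTx vs) ->
  exists S : R,
   [/\ honest_util (sop r) miner M0 =
         (if miner then Num.min (secondHighest (others ++ vs)) r else 0) + S,
       0 <= S,
       \sum_(v <- vs) (if r <= v then v - Num.min (secondHighest (others ++ vs)) r else 0) <= S &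
       forall v, v \in vs -> Num.min (secondHighest (others ++ vs)) r < v ->
         v - Num.min (secondHighest (others ++ vs)) r <= S].
Proof.
move=> r0 nno nnv pM.
set T := others ++ vs; set p := Num.min (secondHighest T) r.
have nnT : nonneg T by rewrite /T /nonneg all_cat; apply/andP.
have p0 : 0 <= p by rewrite le_min sec_ge0 // ltW.
have pr : p <= r by rewrite ge_min lexx orbT.
have truth : forall e, e \in M0 ->
    0 <= e.1 /\ (if e.2 is Some w then w = e.1 /\ w \in vs else True).
  move=> e; rewrite (perm_mem pM) mem_cat => /orP[].
    by case/mapP => o oin ->; split => //; move/allP: nno; apply.
  by case/mapP => v vin ->; split => //; move/allP: nnv; apply.
set b0 := map fst M0.
have pb0 : perm_eq b0 T by have := perm_map fst pM; rewrite map_cat map_fst_other map_fst_truth.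
have nnb0 : nonneg b0 by apply/allP => b /mapP[e /truth[h _] ->].
set m := sop_incl r b0.
have szm : size m = size M0 by rewrite size_sop_incl size_map.
set B0 := mask m M0.
set beta := map fst B0.
have betaE : beta = mask m b0 by rewrite /beta map_mask.
have secb : secondHighest beta = secondHighest T by rewrite betaE sec_incl // (sec_perm pb0).
have nnbeta : nonneg beta by rewrite betaE nonneg_mask.
set n := size B0.
have szb : size beta = n by rewrite size_map.
have nthb : forall k, (k < n)%N -> nth 0 beta k = (nth dtx B0 k).1.
  by move=> k klt; rewrite (nth_map dtx).
have inB : forall k, (k < n)%N -> nth dtx B0 k \in M0.
  by move=> k klt; apply: (mem_mask (m := m)); exact: mem_nth.
have priceE : sop_price r beta = p by rewrite /sop_price secb.
set S := \sum_(k < n) ownc (nth dtx B0 k) (confb r beta k) p.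
have own0 : forall k : 'I_n, 0 <= ownc (nth dtx B0 k) (confb r beta k) p.
  move=> k; have [_] := truth _ (inB k (ltn_ord k)).
  have := nthb k (ltn_ord k).
  case: (nth dtx B0 k) => b [w|] //= hb [wb _]; rewrite wb.
  case ck: (confb r beta k); last by rewrite ownc_unconf subrr max_l // oppr0.
  rewrite ownc_conf subr_ge0.
  move: ck; rewrite /confb hb => /orP[h|/eqP h]; first exact: le_trans pr h.
  have klt : (k < size beta)%N by rewrite szb.
  have := @rank0_ge_sec _ beta k nnbeta klt h; rewrite hb => hs.
  by apply: le_trans hs; rewrite /p ge_min -secb lexx.
have S0 : 0 <= S by apply: sumr_ge0 => k _; exact: own0.
exists S; split => //.
- rewrite /honest_util /honest /= util_sop -/b0 -/m -/B0 -/beta priceE.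
  rewrite [X in _ + X]big1_seq ?addr0 // => e /andP[_ ein].
  have := truth e (mem_mask ein); case: e {ein} => b [w|] //= [_ [-> _]].
  by rewrite /ownU /txu /= subrr max_l // oppr0.
- set g := fun e : tx R => if e.2 is Some v then (if r <= v then v - p else 0) else 0.
  have -> : \sum_(v <- vs) (if r <= v then v - p else 0) = \sum_(e <- M0) g e.
    by rewrite (perm_big _ pM) big_cat /= big_map [X in _ = X + _]big1 // add0r big_map.
  rewrite (perm_big _ (mask_perm szm)) big_cat /=.
  rewrite [X in _ + X]big1_seq ?addr0; last first.
    move=> e /andP[_ /(mem_maskP dtx)[i ilt [hi <-]]].
    move: hi; rewrite (nth_map false) ?szm // sop_incl_nth ?size_map // negb_or => /andP[hr _].
    have := truth _ (mem_nth dtx ilt); rewrite /g (nth_map dtx) // in hr.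
    by case: (nth dtx M0 i) hr => b [w|] //= hr [_ [-> _]]; rewrite /g /= (negbTE hr).
  rewrite (big_nth dtx) big_mkord -/n; apply: ler_sum => k _.
  have [_] := truth _ (inB k (ltn_ord k)); have := nthb k (ltn_ord k).
  have := own0 k; rewrite /g.
  case: (nth dtx B0 k) => b [w|] /= o0 hb; last by move=> _; exact: o0.
  move=> [wb _]; subst w.
  case: ifP => // rb.
  by rewrite (_ : confb r beta k = true) ?ownc_conf // /confb hb rb.
- move=> v vin pv.
  have inM : (v, Some v) \in M0 by rewrite (perm_mem pM) mem_cat; apply/orP; right; apply: map_f.
  have [i ilt ei] := nthP dtx inM.
  have b0i : nth 0 b0 i = v by rewrite (nth_map dtx) // ei.
  have gt : r <= v \/ secondHighest T < v.
    case: (leP r v) => rv; [by left|right].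
    by move: pv; rewrite /p gt_min (lt_gtF rv) orbF.
  have mi : nth false m i.
    rewrite sop_incl_nth ?size_map // b0i.
    case: gt => [->//|st]; rewrite (@rank_gt_sec _ b0 i) ?orbT //; first by rewrite size_map.
    by rewrite (sec_perm pb0) b0i.
  have inB0 : (v, Some v) \in B0 by rewrite -ei; exact: mem_mask_nth.
  have [k klt ek] := nthP dtx inB0.
  have ck : confb r beta k.
    rewrite /confb nthb // ek /=; case: gt => [->//|st]; apply/orP; right; apply/eqP.
    apply: rank_gt_sec => //; first by rewrite szb.
    by rewrite secb nthb // ek.
  have := @sum_ge_pick _ n (fun k : 'I_n => ownc (nth dtx B0 k) (confb r beta k) p) (Ordinal klt) own0.
  by rewrite /= ck ek ownc_conf.
Qed.


Lemma uic_dev {R : realFieldType} (r : R) (others : seq R) (v b : R) (fs : seq R)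
    (M1 : seq (tx R)) (H : R) :
  0 < r -> nonneg others -> 0 <= v -> 0 <= b -> nonneg fs ->
  perm_eq M1 (otherTx others ++ (b, Some v) :: fakeTx fs) ->
  0 <= H -> v - Num.min (secondHighest (others ++ [:: v])) r <= H ->
  honest_util (sop r) false M1 <= H.
Proof.
move=> r0 nno v0 bge0 nnf pM H0 HU.
set T := others ++ [:: v] in HU; set p := Num.min (secondHighest T) r in HU.
have nnT : nonneg T.
  by rewrite /T /nonneg all_cat /= v0 !andbT; exact: nno.
have pr : p <= r by rewrite ge_min lexx orbT.
have memM : forall e, e \in M1 -> 0 <= e.1 /\ (if e.2 is Some w then w = v \/ w = 0 else True).
  move=> e; rewrite (perm_mem pM) mem_cat inE => /or3P[].
  - by case/mapP => o oin ->; split => //; move/allP: nno; apply.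
  - by move/eqP ->; split => //; left.
  - by case/mapP => f fin ->; split; [move/allP: nnf; apply | right].
set b1 := map fst M1.
have nnb1 : nonneg b1 by apply/allP => x /mapP[e /memM[h _] ->].
set m := sop_incl r b1.
set B := mask m M1.
set beta := map fst B.
have betaE : beta = mask m b1 by rewrite /beta map_mask.
have secb : secondHighest beta = secondHighest b1 by rewrite betaE sec_incl.
have nnbeta : nonneg beta by rewrite betaE nonneg_mask.
set n := size B.
have szb : size beta = n by rewrite size_map.
have nthb : forall k, (k < n)%N -> nth 0 beta k = (nth dtx B k).1.
  by move=> k klt; rewrite (nth_map dtx).
have inB : forall k, (k < n)%N -> nth dtx B k \in M1.
  by move=> k klt; apply: (mem_mask (m := m)); exact: mem_nth.
set p' := sop_price r beta.
have p'0 : 0 <= p' by rewrite /p' /sop_price le_min sec_ge0 // ltW.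
rewrite /honest_util /honest /= util_sop -/b1 -/m -/B -/beta -/p' add0r.
apply: (@le_trans _ _ (\sum_(k < n) ownc (nth dtx B k) (confb r beta k) p')).
  by rewrite gerDl rest_le0.
set own := fun k : nat => ownc (nth dtx B k) (confb r beta k) p'.
have posv : forall k, (k < n)%N -> 0 < own k ->
    [/\ confb r beta k, (nth dtx B k).2 = Some v & p' < v].
  move=> k klt; have [_] := memM _ (inB k klt); rewrite /own.
  case: (nth dtx B k) => bk [w|] //=; last by rewrite ltxx.
  case ck: (confb r beta k); last by move=> _; rewrite ltNge ownc_unconf_le0.
  rewrite ownc_conf subr_gt0 => -[->|->] // h.
  by move: p'0; rewrite leNgt h.
case: (boolP (has (fun k => 0 < own k) (iota 0 n))) => hasp; last first.
  apply: le_trans H0; apply: sumr_le0 => k _.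
  move/hasPn: hasp => /(_ k); rewrite mem_iota /= add0n ltn_ord => /(_ isT).
  by rewrite -leNgt.
move: hasp => /hasP[j]; rewrite mem_iota /= add0n => jlt hj.
have [cj ej vp'] := posv j jlt hj.
have vne0 : v != 0 by apply/negP => /eqP v0'; move: vp'; rewrite v0' ltNge p'0.
apply: (@le_trans _ _ (own (Ordinal jlt) + \sum_(k < n) (0:R))).
  apply: sum_le_pick => // k nkj; rewrite leNgt; apply/negP => hk.
  have [_ ek _] := posv k (ltn_ord k) hk.
  have : (2 <= count (fun e : tx R => e.2 == Some v) M1)%N.
    have szm : size m = size M1 by rewrite size_sop_incl size_map.
    apply: leq_trans (count_mask_le _ m M1 szm).
    rewrite (count_iota_nth dtx) -/B -/n.
    apply: (count2_iota _ _ _ _ nkj) => //=; by rewrite ?ek ?ej.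
  rewrite (perm_cnt _ pM) count_cat /= eqxx count_map.
  rewrite (@eq_count _ _ pred0) ?count_pred0; last by [].
  rewrite count_map (@eq_count _ _ pred0) ?count_pred0 //.
  by move=> f /=; apply/negbTE; apply: contra vne0 => /eqP[<-].
rewrite big1 // addr0 /own /= cj.
have inBj := inB j jlt; have bjE := nthb j jlt.
move: ej inBj bjE; case: (nth dtx B j) => bj w /= -> inBj bjE; rewrite ownc_conf.
apply: le_trans HU; rewrite lerD2l lerN2.
case: (leP p 0) => hp0; first exact: le_trans hp0 p'0.
have pT : p <= secondHighest T by rewrite /p ge_min lexx.
have c1 : (2 <= count (geR p) T)%N by rewrite -sec_count.
have : (0 < count (geR p) others)%N.
  move: c1; rewrite /T count_cat /=; case: (geR p v) => /= h; rewrite ?addn1 ?addn0 in h; [by rewrite ltnS in h|exact: ltnW h].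
rewrite -has_count => /hasP[o oin po].
have oM : (o, None) \in M1 by rewrite (perm_mem pM) mem_cat map_f.
have pbj : p <= bj.
  move: cj; rewrite /confb bjE => /orP[h|/eqP h]; first exact: le_trans pr h.
  have ob1 : o \in b1 by apply/mapP; exists (o, None).
  have [z zin oz] := incl_max r b1 o ob1.
  rewrite -betaE in zin; have [k klt ez] := nthP 0 zin; subst z.
  apply: le_trans po (le_trans oz _); rewrite -bjE; exact: rank0_max h klt.
have c2 : (2 <= count (geR p) b1)%N.
  rewrite /b1 count_map.
  apply: (@count2 _ _ _ (o, None) (bj, Some v)) => //; by apply/eqP; case.
have : p <= secondHighest beta by rewrite secb sec_count.
by move=> h; rewrite /p' /sop_price le_min h pr.
Qed.


Theorem mainTheorem7 (R : realFieldType) (r : R) :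
  0 < r ->
  weak_UIC (sop r) /\ weak_MIC (sop r) /\
  (forall c : nat, (1 <= c)%N -> c_weak_SCP (sop r) c).
Proof.
move=> r0; split; [|split].
- move=> others v b fs M0 M1 nno v0 b0 nnf pM0 pM1.
  have nnv : nonneg [:: v] by rewrite /nonneg /= v0.
  have [S [HE S0 HF2 HF3]] := @honest_facts _ r others [:: v] M0 false r0 nno nnv pM0.
  rewrite HE /= add0r.
  apply: (@uic_dev _ r others v b fs M1 S r0 nno v0 b0 nnf pM1 S0).
  set p := Num.min _ r.
  case: (leP v p) => hv; first by apply: le_trans S0; rewrite subr_le0.
  by apply: HF3 => //; rewrite mem_seq1.
- move=> others fs M0 block rest nno nnf pM0 pF.
  have pM0' : perm_eq M0 (otherTx others ++ truthTx [::]) by rewrite cats0.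
  have [S [HE S0 HF2 HF3]] := @honest_facts _ r others [::] M0 true r0 nno isT pM0'.
  rewrite HE /=.
  apply: (@dev_bound _ r others [::] [::] fs block rest _ r0 erefl nno isT isT nnf pF).
  + by rewrite lerDl.
  + by rewrite big_nil addr0 lerDl.
  + by [].
- move=> c c1 others vs bs fs M0 block rest _ sz nno nnv nnb nnf pM0 pF.
  have [S [HE S0 HF2 HF3]] := @honest_facts _ r others vs M0 true r0 nno nnv pM0.
  rewrite HE /=.
  apply: (@dev_bound _ r others vs bs fs block rest _ r0 sz nno nnv nnb nnf pF).
  + by rewrite lerDl.
  + by rewrite lerD2l.
  + move=> v vin; set p := Num.min _ r.
    case: (leP v p) => hv; first by apply: le_trans hv _; rewrite lerDl.
    by rewrite -lerBlDl; apply: HF3.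
Qed.
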